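(* Let $1\le i,j\le p$ and $e,e'\in\mathbb{F}_p$. Suppose $\varphi\colon B_{i,e}\to B_{j,e'}$ is a surjective group homomorphism compatible with the projections of both groups onto $G$ (so its kernel lies in the normal subgroup $A/A_i$ and it restricts to a $G$-equivariant surjection $A/A_i\to A/A_j$). Then $i>j$, $e'=0$, and $\ker\varphi=A_j/A_i$. Conversely, for every $i>j\ge1$ and every $e\in\mathbb{F}_p$, the quotient of $B_{i,e}$ by $A_j/A_i$ is $B_{j,0}$, giving such a surjection $B_{i,e}\to B_{j,0}$.
   Context: $p$ is an odd prime and $G=\langle\sigma\rangle$ is cyclic of order $p$. $A=\bigoplus_{k=0}^{p-1}\mathbb{F}_p\tau^k$ is the free $\mathbb{F}_p[G]$-module on $\tau$ with $\sigma$ acting by multiplication by $\tau$; for $1\le i<p$, $A_i$ is the $\mathbb{F}_p$-span of $(\tau-1)^k$, $i\le k\le p-1$, and $A_p=0$. For $1\le i\le p$ and $e\in\mathbb{F}_p$, $B_{i,e}$ denotes the group extension $1\to A/A_i\to B_{i,e}\to G\to1$ (with $A/A_i$ written additively as a normal subgroup) in which conjugation by a lift $\tilde\sigma$ of $\sigma$ acts on $A/A_i$ as multiplication by $\tau$ and $\tilde\sigma^p=e\,\overline{(\tau-1)}^{\,i-1}$; this determines $B_{i,e}$ up to equivalence. $B_{i,0}=(A/A_i)\rtimes G$. *)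

(* Defs.v *)
From HB Require Import structures.
From mathcomp Require Import all_boot all_order all_algebra.

Import GRing.Theory.
Local Open Scope ring_scope.

(* A = F_p[tau] (tau^p = 1) ; since (tau-1)^p = tau^p - 1 in char p and
   A_i is the ideal spanned by (tau-1)^k, k >= i, we have
   A/A_i = F_p[tau]/((tau-1)^i).  An element of A/A_i is represented by its
   canonical representative: the remainder modulo ('X - 1)^i, i.e. a
   polynomial (in tau = 'X) of size <= i. *)
Definition Arep (p i : nat) := {a : {poly 'F_p} | (size a <= i)%N}.

Definition modA (p i : nat) (q : {poly 'F_p}) : {poly 'F_p} := q %% ('X - 1) ^+ i.

Lemma size_modA p i q : (size (modA p i q) <= i)%N.
Proof.
rewrite /modA -polyC1.
have nz : ('X - (1 : 'F_p)%:P) ^+ i != 0.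
  by rewrite expf_neq0 // polyXsubC_eq0.
by have := ltn_modp q (('X - (1 : 'F_p)%:P) ^+ i); rewrite nz size_exp_XsubC ltnS.
Qed.

Definition toA p i (q : {poly 'F_p}) : Arep p i := exist _ (modA p i q) (size_modA p i q).

(* Carrier of B_{i,e}: the pair (a, k) stands for a * sigma~^k,
   with a in A/A_i and k in Z/p = G. *)
Definition Bgrp (p i : nat) := (Arep p i * 'Z_p)%type.

(* sigma~^p = e (tau - 1)^(i-1) *)
Definition tw p i (e : 'F_p) : {poly 'F_p} := e%:P * ('X - 1) ^+ i.-1.

(* (a sigma~^k)(b sigma~^l) = (a + tau^k b) sigma~^(k+l), and
   sigma~^(k+l) = sigma~^p sigma~^(k+l-p) when k + l >= p. *)
Definition mulB p i (e : 'F_p) (x y : Bgrp p i) : Bgrp p i :=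
  (toA p i (val x.1 + 'X ^+ (x.2 : nat) * val y.1
            + (if (p <= x.2 + y.2)%N then tw p i e else 0)),
   x.2 + y.2).

Definition oneB p i : Bgrp p i := (toA p i 0, 0).

Definition ghom (p i j : nat) (e e' : 'F_p) (f : Bgrp p i -> Bgrp p j) :=
  forall x y, f (mulB p i e x y) = mulB p j e' (f x) (f y).

Definition surj {X Y : Type} (f : X -> Y) := forall y, exists x, f x = y.

Definition overG (p i j : nat) (f : Bgrp p i -> Bgrp p j) := forall x, (f x).2 = x.2.

Definition inAjAi (p i j : nat) (x : Bgrp p i) : Prop :=
  x.2 = 0 /\ (('X - 1) ^+ j %| val x.1).

(* Main.v *)
Require Import Defs.
From mathcomp Require Import all_boot all_order all_algebra.
Import GRing.Theory.
Local Open Scope ring_scope.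

Set Implicit Arguments.
Unset Strict Implicit.
Section Basics.
Variable p : nat.
Local Notation P := {poly 'F_p}.

Definition QQ (i : nat) : P := ('X - 1) ^+ i.

Lemma sizeQ i : size (QQ i) = i.+1.
Proof. by rewrite /QQ -polyC1 size_exp_XsubC. Qed.

Lemma QQ_neq0 i : QQ i != 0.
Proof. by rewrite -size_poly_eq0 sizeQ. Qed.

Definition cg i (a b : P) := QQ i %| a - b.

Lemma cg_refl i a : cg i a a.
Proof. by rewrite /cg subrr dvdp0. Qed.

Lemma cg_sym i a b : cg i a b -> cg i b a.
Proof. by rewrite /cg -dvdpNr opprB. Qed.

Lemma cg_trans i a b c : cg i a b -> cg i b c -> cg i a c.
Proof.
rewrite /cg => h1 h2; have := dvdp_add h1 h2.
by rewrite addrA subrK.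
Qed.

Lemma cg_add i a b c d : cg i a b -> cg i c d -> cg i (a + c) (b + d).
Proof.
rewrite /cg => h1 h2; have := dvdp_add h1 h2.
by rewrite opprD addrACA.
Qed.

Lemma cg_mull i m a b : cg i a b -> cg i (m * a) (m * b).
Proof. by rewrite /cg -mulrBr; apply: dvdp_mull. Qed.

Lemma cg_weak i j a b : (j <= i)%N -> cg i a b -> cg j a b.
Proof. move=> le; apply: dvdp_trans; exact: dvdp_exp2l. Qed.

Lemma cg_mod i q : cg i (q %% QQ i) q.
Proof.
rewrite /cg /dvdp modpD modpN modp_id -/(QQ i) subrr //.
Qed.

Lemma cg0 i a : QQ i %| a -> cg i a 0.
Proof. by rewrite /cg subr0. Qed.

Lemma cg0E i a : cg i a 0 -> QQ i %| a.
Proof. by rewrite /cg subr0. Qed.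

Lemma small_mod i (a : P) : (size a <= i)%N -> a %% QQ i = a.
Proof. by move=> h; rewrite modp_small // sizeQ ltnS. Qed.

Lemma red0 i (r : P) : (size r <= i)%N -> QQ i %| r -> r = 0.
Proof. by move=> h /modp_eq0; rewrite small_mod. Qed.

Lemma red_eq i (a b : P) : (size a <= i)%N -> (size b <= i)%N -> cg i a b -> a = b.
Proof.
move=> ha hb h; apply/eqP; rewrite -subr_eq0; apply/eqP; apply: (red0 (i:=i)) h.
by apply: leq_trans (size_polyD _ _) _; rewrite size_polyN geq_max ha hb.
Qed.

Lemma val_toA i q : val (toA p i q) = q %% QQ i.
Proof. by []. Qed.

Lemma toA_val i (a : Arep p i) : toA p i (val a) = a.
Proof. by apply: val_inj; rewrite /= /modA small_mod //; exact: (valP a). Qed.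

Lemma toA_eq i q1 q2 : cg i q1 q2 -> toA p i q1 = toA p i q2.
Proof.
move=> h; apply: val_inj; rewrite /= /modA -/(QQ i).
apply: (red_eq (i:=i)); try exact: size_modA.
apply: cg_trans (cg_mod _ _) _; apply: cg_sym; apply: cg_trans (cg_mod _ _) _.
exact: cg_sym.
Qed.

Lemma cg_toA i q : cg i (val (toA p i q)) q.
Proof. exact: cg_mod. Qed.

Lemma sizeA i (a : Arep p i) : (size (val a) <= i)%N.
Proof. exact: (valP a). Qed.

End Basics.

Unset Implicit Arguments.
Set Strict Implicit.

Section Pw.
Variable p : nat.
Hypothesis pP : prime p.
Local Notation P := {poly 'F_p}.

Lemma zc : (Zp_trunc p).+2 = p.
Proof. by rewrite Zp_cast // prime_gt1. Qed.

Lemma zlt (x : 'Z_p) : (nat_of_ord x < p)%N.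
Proof. by apply: leq_trans (ltn_ord x) _; rewrite zc. Qed.

Lemma zadd (x y : 'Z_p) : nat_of_ord (x + y)%R = ((nat_of_ord x + nat_of_ord y) %% p)%N.
Proof. by have e := zc; rewrite /=; move: (nat_of_ord x + nat_of_ord y)%N => m; rewrite e. Qed.

Definition SS n : P := \sum_(m < n) 'X^m.

Lemma SS_S n : SS n.+1 = 1 + 'X * SS n.
Proof.
rewrite /SS big_ord_recl expr0 mulr_sumr; congr (_ + _).
by apply: eq_bigr => m _; rewrite /bump /= exprS.
Qed.

Lemma SS_p : SS p = QQ p (p.-1).
Proof.
have pch : p \in [pchar P] by rewrite pchar_poly pchar_Fp.
have h := subrX1 ('X : P) p.
have fr : 'X^p - 1 = ('X - 1 : P) ^+ p.
  by rewrite -!(pFrobenius_autE pch) pFrobenius_autB_comm ?pFrobenius_autE ?expr1n //;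
    exact: commr1.
apply: (@mulfI _ ('X - 1 : P)).
  by rewrite -size_poly_eq0 -polyC1 size_XsubC.
by rewrite -/(SS p) -h fr /QQ -exprS prednK // prime_gt0.
Qed.

Definition pw k e (c : Arep p k) n := iter n (mulB p k e (c, 1%R)) (oneB p k).

Lemma pw_spec k e c n : (n < p)%N ->
  nat_of_ord (pw k e c n).2 = n /\ cg k (val (pw k e c n).1) (val c * SS n).
Proof.
elim: n => [|n IH] lt.
  split=> //=; rewrite /SS big_ord0 mulr0 /modA mod0p; exact: cg_refl.
have [h2 h1] := IH (ltnW lt).
rewrite /pw iterS -/(pw k e c n); split.
  by rewrite /= h2 zc (modn_small (prime_gt1 pP)) add1n modn_small.
rewrite /mulB /= h2 ifF; last by apply/negbTE; rewrite -ltnNge.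
apply: cg_trans (cg_toA _ _) _; rewrite addr0 expr1 SS_S mulrDr mulr1.
apply: cg_add; first exact: cg_refl.
by rewrite mulrCA; apply: cg_mull.
Qed.

Lemma pw_p k e c :
  (pw k e c p).2 = 0%R /\ cg k (val (pw k e c p).1) (val c * SS p + tw p k e).
Proof.
have p1 := prime_gt1 pP.
have lt : (p.-1 < p)%N by rewrite prednK ?leqnn // ltnW.
have [h2 h1] := pw_spec k e c _ lt.
have -> : pw k e c p = mulB p k e (c, 1%R) (pw k e c p.-1).
  by rewrite /pw -iterS prednK // ltnW.
split.
  apply: val_inj; rewrite /= h2 zc (modn_small p1) add1n prednK ?modnn //; exact: ltnW.
rewrite /mulB /= h2 add1n prednK ?leqnn ?(ltnW p1) //.
have -> : SS p = SS (p.-1).+1 by rewrite prednK // ltnW.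
apply: cg_trans (cg_toA _ _) _; rewrite expr1 SS_S mulrDr mulr1.
apply: cg_add => //; last exact: cg_refl.
apply: cg_add; first exact: cg_refl.
by rewrite mulrCA; apply: cg_mull.
Qed.

Lemma mul1B k e (x : Bgrp p k) : mulB p k e (oneB p k) x = x.
Proof.
case: x => a l; rewrite /mulB /oneB /=; congr pair; last by rewrite add0r.
rewrite ifF; last by apply/negbTE; rewrite -ltnNge zlt.
rewrite -[RHS]toA_val; apply: toA_eq; rewrite addr0 mul1r.
rewrite -[X in cg _ _ X]add0r; apply: cg_add; last exact: cg_refl.
rewrite /modA mod0p; exact: cg_refl.
Qed.

End Pw.

Section Part2.
Variable p : nat.

Definition phi2 i j (x : Bgrp p i) : Bgrp p j := (toA p j (val x.1), x.2).

Lemma part2 (i j : nat) (e : 'F_p) : (1 <= j)%N -> (j < i)%N -> (i <= p)%N ->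
      exists phi : Bgrp p i -> Bgrp p j,
        [/\ ghom p i j e 0 phi, surj phi, overG p i j phi &
            forall x, phi x = oneB p j <-> inAjAi p i j x].
Proof.
move=> j1 ji ip; have le_ji : (j <= i)%N by apply: ltnW.
exists (@phi2 i j); split.
- move=> [a k] [b l]; rewrite /phi2 /mulB /=; congr pair.
  apply: toA_eq; apply: cg_trans (cg_weak le_ji (cg_toA _ _)) _.
  apply: cg_add; first apply: cg_add.
  + exact: cg_sym (cg_toA _ _).
  + exact: cg_mull (cg_sym (cg_toA _ _)).
  + case: ifP => _; last exact: cg_refl.
    rewrite /tw polyC0 mul0r; apply: cg0; apply: dvdp_mull.
    by apply: dvdp_exp2l; rewrite -ltnS prednK // (leq_trans _ ji).
- move=> [b k]; exists (toA p i (val b), k); rewrite /phi2 /=; congr pair.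
  rewrite -[RHS]toA_val; apply: toA_eq; apply: cg_weak le_ji (cg_toA _ _).
- by [].
- move=> [a k]; rewrite /phi2 /oneB /inAjAi /=; split.
  + case=> h ->; split=> //; move: (congr1 val h); rewrite /= /modA mod0p.
    by move=> h2; rewrite /dvdp; apply/eqP; apply: val_inj.
  + case=> -> h; congr pair; apply: toA_eq; exact: cg0 h.
Qed.
End Part2.

Lemma cg_addl p k (a b c : {poly 'F_p}) : cg k (c + a) (c + b) -> cg k a b.
Proof. by rewrite /cg opprD addrACA subrr add0r. Qed.

Lemma cg_modeq p k (a b : {poly 'F_p}) : a %% QQ p k = b %% QQ p k -> cg k a b.
Proof.
move=> h; apply: cg_trans (cg_sym (cg_mod _ a)) _; rewrite h; exact: cg_mod.
Qed.

Lemma inv_step p k (u v w : {poly 'F_p}) : cg k (v * u) 1 -> cg k (w * u) 0 -> cg k w 0.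
Proof.
move=> h1 h2; rewrite -[w]mulr1.
apply: cg_trans (cg_mull _ (cg_sym h1)) _.
rewrite mulrCA -[X in cg _ _ X](mulr0 v); exact: cg_mull.
Qed.

Lemma z1 p : (1 %% (Zp_trunc p).+2 = 1)%N.
Proof. by rewrite modn_small. Qed.

Section Part1.
Variable p : nat.
Hypothesis pP : prime p.
Variables (i j : nat) (e e' : 'F_p) (phi : Bgrp p i -> Bgrp p j).
Hypotheses (hi : (1 <= i <= p)%N) (hj : (1 <= j <= p)%N).
Hypotheses (hom : ghom p i j e e' phi) (sur : surj phi) (ovg : overG p i j phi).

Lemma phiE x : phi x = ((phi x).1, x.2).
Proof. by move: (ovg x); case: (phi x) => a b /= <-. Qed.

Lemma pge (n : nat) : (n < p)%N -> (p <= n)%N = false.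
Proof. by move=> h; apply/negbTE; rewrite -ltnNge. Qed.

Lemma phi1 : phi (oneB p i) = oneB p j.
Proof.
have h := hom (oneB p i) (oneB p i); rewrite mul1B // in h.
move: h; rewrite (phiE (oneB p i)); move: (phi _).1 => c.
rewrite /mulB /oneB /= pge ?prime_gt0 // expr0 mul1r addr0.
case=> h; congr pair; apply: val_inj; rewrite /= /modA mod0p.
move: (congr1 val h); rewrite /= /modA small_mod.
  by move/eqP; rewrite -subr_eq0 opprD addNKr oppr_eq0 => /eqP.
apply: leq_trans (size_polyD _ _) _; rewrite geq_max !sizeA //.
Qed.

Definition G (q : {poly 'F_p}) := val (phi (toA p i q, 0%R)).1.

Lemma G_add q1 q2 : cg j (G (q1 + q2)) (G q1 + G q2).
Proof.
have m : mulB p i e (toA p i q1, 0%R) (toA p i q2, 0%R) = (toA p i (q1 + q2), 0%R).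
  rewrite /mulB /= pge ?prime_gt0 // addr0 expr0 mul1r; congr pair; last exact: addr0.
  apply: toA_eq; apply: cg_add; exact: cg_toA.
have h := hom (toA p i q1, 0%R) (toA p i q2, 0%R); rewrite m in h.
rewrite /G h /mulB /= !ovg /= pge ?prime_gt0 // expr0 mul1r addr0.
exact: cg_toA.
Qed.

Lemma G0 : G 0 = 0.
Proof.
have h := G_add 0 0; rewrite addr0 -{1}[G 0]addr0 in h.
have h2 := cg_addl _ _ _ _ _ h.
apply: (red0 (i:=j)); first exact: sizeA.
apply: cg0E; exact: cg_sym h2.
Qed.

Lemma G_X q : cg j (G ('X * q)) ('X * G q).
Proof.
pose s : Bgrp p i := (toA p i 0, 1%R).
have p1 := prime_gt1 pP.
have m : mulB p i e s (toA p i q, 0%R) = mulB p i e (toA p i ('X * q), 0%R) s.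
  rewrite /mulB /= !pge ?addn0 ?add0n // z1; congr pair; last by rewrite addr0 add0r.
  apply: toA_eq; rewrite !addr0 expr1 expr0 mul1r /modA mod0p add0r addr0.
  apply: cg_trans (cg_mull _ (cg_toA _ _)) _; apply: cg_sym; exact: cg_toA.
have := congr1 (fun z => val z.1) (etrans (esym (hom _ _)) (etrans (congr1 phi m) (hom _ _))).
rewrite /mulB /= !ovg /= !pge ?addn0 ?add0n // z1 !addr0 expr1 expr0 mul1r.
move/cg_modeq; rewrite [X in cg _ _ X]addrC => /cg_addl h; exact: (cg_sym h).
Qed.

Lemma G_nat n : cg j (G n%:R) (n%:R * G 1).
Proof.
elim: n => [|n IH]; first by rewrite mul0r G0; exact: cg_refl.
rewrite -[n.+1]addn1 !natrD mulrDl mul1r.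
apply: cg_trans (G_add _ _) _; apply: cg_add => //; exact: cg_refl.
Qed.

Lemma G_lin q : cg j (G q) (q * G 1).
Proof.
elim/poly_ind: q => [|q c IH]; first by rewrite G0 mul0r; exact: cg_refl.
apply: cg_trans (G_add _ _) _; rewrite mulrDl; apply: cg_add.
  rewrite mulrC; apply: cg_trans (G_X _) _; rewrite -mulrA; exact: cg_mull.
have -> : c%:P = (nat_of_ord c)%:R :> {poly 'F_p} by rewrite -polyC_natr natr_Zp.
exact: G_nat.
Qed.

Lemma G_val (a : Arep p i) : val (phi (a, 0%R)).1 = G (val a).
Proof. by rewrite /G toA_val. Qed.

Lemma inv_ex : exists v, cg j (v * G 1) 1.
Proof.
have [x hx] := sur (toA p j 1, 0%R).
have x2 : x.2 = 0%R by rewrite -ovg hx.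
exists (val x.1); apply: cg_sym; apply: cg_trans (G_lin _); rewrite -G_val.
have -> : (x.1, 0%R) = x by rewrite -x2; case: (x).
rewrite hx; apply: cg_sym; exact: cg_toA.
Qed.

Lemma ker x : phi x = oneB p j <-> inAjAi p i j x.
Proof.
have [v hv] := inv_ex.
case: x => a k; rewrite /inAjAi /=; split.
  move=> h; have k0 : k = 0%R by rewrite -[k]/((a, k).2) -ovg h.
  split=> //; subst k; move: (congr1 (fun z => val z.1) h).
  rewrite /= G_val /modA mod0p => hG.
  apply: cg0E; apply: (inv_step _ _ _ _ _ hv).
  rewrite -hG; exact: cg_sym (G_lin _).
case=> -> hd; rewrite phiE; congr pair; apply: val_inj.
rewrite /= G_val /modA mod0p; apply: (red0 (i:=j)); first exact: sizeA.
apply: cg0E; apply: cg_trans (G_lin _) _; apply: cg0; exact: dvdp_mulr.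
Qed.

Lemma jlei : (j <= i)%N.
Proof.
have [v hv] := inv_ex.
have h : cg j (QQ p i * G 1) 0.
  apply: cg_trans (cg_sym (G_lin _)) _; rewrite -G0 /G.
  have -> : toA p i (QQ p i) = toA p i 0 by apply: toA_eq; apply: cg0; exact: dvdpp.
  exact: cg_refl.
have := inv_step _ _ _ _ _ hv h; move/cg0E/(dvdp_leq (QQ_neq0 _ _)).
by rewrite !sizeQ.
Qed.

Lemma phi_pw n : phi (pw p i e (toA p i 0) n) = pw p j e' (phi (toA p i 0, 1%R)).1 n.
Proof.
elim: n => [|n IH]; first exact: phi1.
rewrite /pw !iterS -/(pw p i e _ n) -/(pw p j e' _ n) hom IH.
by rewrite [phi (toA p i 0, 1%R)]phiE.
Qed.

Lemma part1 : (exists x, x <> oneB p i /\ phi x = oneB p j) ->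
  [/\ (j < i)%N, e' = 0 & forall x, phi x = oneB p j <-> inAjAi p i j x].
Proof.
move=> [x [nx hx]].
have i1 : (0 < i)%N by case/andP: hi.
have j1 : (0 < j)%N by case/andP: hj.
have ip : (i <= p)%N by case/andP: hi.
have jl : (j < i)%N.
  rewrite ltn_neqAle jlei andbT; apply/eqP => eji.
  move/ker: hx => [x2 hd]; apply: nx.
  move: x2 hd; case: x => a k /= -> hd; congr pair; apply: val_inj.
  rewrite /= /modA mod0p; apply: (red0 (i:=i)); first exact: sizeA.
  by move: hd; rewrite eji.
split=> //; last exact: ker.
pose c' := (phi (toA p i 0, 1%R)).1.
have hk : phi (pw p i e (toA p i 0) p) = oneB p j.
  apply/ker; have [h2 h1] := pw_p p pP i e (toA p i 0); split=> //.
  apply: cg0E; apply: cg_trans (cg_weak (ltnW jl) h1) _.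
  rewrite /= /modA mod0p mul0r add0r; apply: cg0; rewrite /tw; apply: dvdp_mull.
  by apply: dvdp_exp2l; rewrite -ltnS prednK.
rewrite phi_pw in hk.
have [_ h1] := pw_p p pP j e' c'.
rewrite hk /= /modA mod0p in h1.
have hm : QQ p j %| val c' * SS p p.
  apply: dvdp_mull; rewrite SS_p //; apply: dvdp_exp2l.
  by rewrite -ltnS prednK ?prime_gt0 // (leq_trans jl).
have hd : QQ p j %| tw p j e'.
  by have := cg0E (cg_sym h1); rewrite (dvdp_addr _ hm).
apply/eqP; apply: contraT => ne.
have sz : size (tw p j e') = j by rewrite /tw size_Cmul // -polyC1 size_exp_XsubC prednK.
have tnz : tw p j e' != 0 by rewrite -size_poly_eq0 sz -lt0n.
by have := dvdp_leq tnz hd; rewrite sizeQ sz ltnn.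
Qed.

End Part1.

Theorem lemma2 (p : nat) (p_prime : prime p) (p_odd : odd p) :
  (forall (i j : nat) (e e' : 'F_p) (phi : Bgrp p i -> Bgrp p j),
      (1 <= i <= p)%N -> (1 <= j <= p)%N ->
      ghom p i j e e' phi -> surj phi -> overG p i j phi ->
      (exists x, x <> oneB p i /\ phi x = oneB p j) ->
      [/\ (j < i)%N, e' = 0 &
          forall x, phi x = oneB p j <-> inAjAi p i j x])
  /\
  (forall (i j : nat) (e : 'F_p), (1 <= j)%N -> (j < i)%N -> (i <= p)%N ->
      exists phi : Bgrp p i -> Bgrp p j,
        [/\ ghom p i j e 0 phi, surj phi, overG p i j phi &
            forall x, phi x = oneB p j <-> inAjAi p i j x]).
Proof.
split.
- move=> i j e e' phi hi hj hom sur ovg; exact: part1.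
- move=> i j e h1 h2 h3; exact: part2.
Qed.
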